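(* Let $G$ be a maximal $1$-plane graph with at least $4$ vertices in which every edge lies in some $K_4$-subgraph, and let $\{G_i\}_{i\in\{0,\dots,N\}}$ be a $K_4$-extension sequence of $G$ determined by the SWM*-rule, with $G_i=G[V(G_{i-1})\cup V(F_i)]$. For any $i\in\{1,\dots,N\}$, if $\{s,t\}$ is a cut-set of $G_i$ but not of $G_{i-1}$, then (1) $F_i$ is either a weak or a micro $K_4$-link from $G_{i-1}$; and (2) either $\{s,t\}\subseteq V(G_{i-1})$, or $F_i$ is a micro $K_4$-link from $G_{i-1}$ and $|\{s,t\}\cap V(G_{i-1})|=1$.
   Context: A $1$-plane graph is a simple graph drawn in the plane (vertices distinct points, edges arcs joining their ends, no edge crossing itself, two edges crossing at most once, adjacent edges not crossing) so that every edge is crossed at most once; it is maximal if no edge joining two non-adjacent vertices can be added so that the result is still a simple $1$-plane graph. An edge is clean if it crosses no other edge. If edge $ux$ crosses another edge at point $\alpha$, the arc $u\alpha$ is the near half-edge of $ux$ incident with $u$. Two edge segments are consecutive on the boundary of a face if they are consecutive on one of the closed walks forming that boundary. $G[A]$ is the subgraph induced by $A$. A cut-set of a connected graph is a set of vertices whose deletion disconnects it. For a vertex-induced subgraph $G'$ and a $K_4$-subgraph $F$ of $G$ with $1\le|V(F)\cap V(G')|\le 3$, $F$ is a strong/weak/micro $K_4$-link from $G'$ when $|V(F)\cap V(G')|=3/2/1$, and $G[V(G')\cup V(F)]$ is the corresponding $K_4$-extension of $G'$. SWM*-rule for a proper vertex-induced subgraph $G'$: choose any strong $K_4$-link from $G'$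 if one exists; otherwise any weak one if one exists; otherwise choose $u\in V(G')$ with $N_G(u)\not\subseteq V(G')$, then $x\in N_G(u)\setminus V(G')$ such that for some $w\in N_G(u)\cap V(G')$ the edge $ux$ (or its near half-edge at $u$) and $uw$ (or its near half-edge at $u$) are consecutive on the boundary of some face of $G$; if $ux$ is clean choose any $K_4$-subgraph containing $ux$, and if $ux$ crosses edge $st$ choose $G[\{u,x,s,t\}]$. A $K_4$-extension sequence determined by the SWM*-rule is $G_0\cong K_4$, $G_N=G$, $G_i=G[V(G_{i-1})\cup V(F_i)]$ with $F_i$ a $K_4$-link from $G_{i-1}$ chosen by the SWM*-rule. *)

(* Defs.v *)
(* A simple 1-plane graph is encoded combinatorially through its
   planarization: the plane map obtained by turning every crossing point
   into a degree-4 node.  The planarization is given as a combinatorial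
   map on a finite set of darts D (half edge-segments):
     node  : D -> V + C   tail of a dart (a real vertex, or a crossing),
     alpha : involution reversing a dart,
     sigma : rotation (cyclic order of darts around each node).
   Faces are the orbits of  phi := sigma o alpha.  Planarity (genus 0)
   is Euler's formula for the connected map. *)
From mathcomp Require Import all_boot all_fingroup.
Set Implicit Arguments. Unset Strict Implicit. Unset Printing Implicit Defensive.

Section OnePlane.
Variables (V C D : finType) (node : D -> (V + C)%type) (alpha sigma : {perm D}).

Definition phi (d : D) : D := sigma (alpha d).

Definition norb (f : D -> D) : nat := #|[set x | froot f x == x]|.

(* the far end of the edge of G whose near half-edge starts with dart d:
   if alpha d ends at a crossing, continue straight through the crossing
   (the opposite dart in the rotation, sigma^2) *)
Definition farnode (d : D) : V + C :=
  match node (alpha d) with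
  | inl v => inl v
  | inr _ => node (alpha (sigma (sigma (alpha d))))
  end.

Definition one_plane : Prop :=
  [/\ (forall d, alpha (alpha d) = d) /\ (forall d, alpha d != d),
      (forall d d', (node d == node d') = fconnect sigma d d'),
      (forall n, exists d, node d = n) /\
      (forall d d', connect [rel x y | (y == alpha x) || (y == sigma x)] d d'),
      (* planarity: V - E + F = 2 for the connected planarization *)
      norb sigma + norb phi = #|D| %/ 2 + 2 &
      [/\
          (forall c, #|[set d | node d == inr c]| = 4),
          (* each edge is crossed at most once: segments at a crossing end
             at real vertices *)
          (forall d c, node d = inr c -> exists v, node (alpha d) = inl v),
          (* the two crossing edges have 4 distinct ends (adjacent edges do
             not cross, no edge crosses itself) *)
          (forall d d' c, node d = inr c -> node d' = inr c ->
             node (alpha d) = node (alpha d') -> d = d'),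
          (forall d u, node d = inl u -> farnode d != inl u) &
          (* no multiple edges *)
          (forall d d' u, node d = inl u -> node d' = inl u ->
             farnode d = farnode d' -> d = d')]].

Definition gadj : rel V :=
  fun u v => [exists d, (node d == inl u) && (farnode d == inl v)].

Definition on_face (u : V) (d : D) : Prop :=
  exists du, node du = inl u /\ fconnect phi du d.

(* a new edge uv can be added to the drawing keeping it simple 1-plane:
   either drawn inside a common face (clean), or crossing exactly one
   clean edge ab, with a, b not in {u, v}, passing from the face on one
   side of ab to the face on the other side *)
Definition can_add (u v : V) : Prop :=
  (exists d, on_face u d /\ on_face v d) \/
  (exists de a b, [/\ node de = inl a, node (alpha de) = inl b,
                      [&& a != u, a != v, b != u & b != v],
                      on_face u de & on_face v (alpha de)]).

Definition maximal_1p : Prop :=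
  forall u v, u != v -> ~~ gadj u v -> ~ can_add u v.

Definition clean (u x : V) : Prop :=
  exists d, [/\ node d = inl u, farnode d = inl x & exists v, node (alpha d) = inl v].

Definition crosses (u x s t : V) : Prop :=
  exists d c, [/\ node d = inl u, farnode d = inl x, node (alpha d) = inr c &
    (node (alpha (sigma (alpha d))) = inl s /\
     node (alpha (sigma (sigma (sigma (alpha d))))) = inl t) \/
    (node (alpha (sigma (alpha d))) = inl t /\
     node (alpha (sigma (sigma (sigma (alpha d))))) = inl s)].

(* ux (or its near half-edge at u) and uw (or its near half-edge at u) are
   consecutive on the boundary of some face: rotation-consecutive at u *)
Definition consecutive (u x w : V) : Prop :=
  exists d, node d = inl u /\
    ((farnode d = inl x /\ farnode (sigma d) = inl w) \/
     (farnode d = inl w /\ farnode (sigma d) = inl x)).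

(* K4-subgraphs, identified with their (4-clique) vertex sets *)
Definition isK4 (F : {set V}) : bool :=
  (#|F| == 4) && [forall u in F, forall v in F, (u != v) ==> gadj u v].

Definition K4link (A F : {set V}) : bool :=
  isK4 F && (1 <= #|F :&: A| <= 3).
Definition strong_link (A F : {set V}) : bool := isK4 F && (#|F :&: A| == 3).
Definition weak_link (A F : {set V}) : bool := isK4 F && (#|F :&: A| == 2).
Definition micro_link (A F : {set V}) : bool := isK4 F && (#|F :&: A| == 1).

Definition swm_choice (A F : {set V}) : Prop :=
  ((exists F', strong_link A F') /\ strong_link A F) \/
  ((~ exists F', strong_link A F') /\ (exists F', weak_link A F') /\ weak_link A F) \/
  [/\ ~ (exists F', strong_link A F'), ~ (exists F', weak_link A F'), isK4 F &
      exists u x w, [/\ [&& u \in A, x \notin A & w \in A], gadj u x, gadj u w &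
        consecutive u x w /\
        ((clean u x /\ u \in F /\ x \in F) \/
         (exists s t, crosses u x s t /\ F = [set u; x; s; t]))]].

(* K4-extension sequence determined by the SWM*-rule: Vs i = V(G_i),
   Fs i = V(F_i) *)
Definition swm_sequence (N : nat) (Vs Fs : nat -> {set V}) : Prop :=
  [/\ isK4 (Vs 0), Vs N = setT &
      forall i, 1 <= i <= N ->
        [/\ K4link (Vs i.-1) (Fs i), swm_choice (Vs i.-1) (Fs i) &
            Vs i = Vs i.-1 :|: Fs i]].

End OnePlane.

Definition induced_connect (V : finType) (adj : rel V) (B : {set V}) : rel V :=
  connect [rel x y | [&& x \in B, y \in B & adj x y]].

Definition cutset (V : finType) (adj : rel V) (A S : {set V}) : Prop :=
  S \subset A /\
  exists u v, [/\ u \in A :\: S, v \in A :\: S &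
                  ~~ induced_connect adj (A :\: S) u v].

(* Main.v *)
Require Import Defs.
From mathcomp Require Import all_boot all_fingroup.
Set Implicit Arguments. Unset Strict Implicit. Unset Printing Implicit Defensive.

Section Geo.
Variables (V C D : finType) (node : D -> (V + C)%type) (alpha sigma : {perm D}).
Hypothesis HP : one_plane node alpha sigma.
Local Notation adj := (gadj node alpha sigma).
Local Notation ph := (phi alpha sigma).

Lemma aK d : alpha (alpha d) = d.
Proof. by case: HP => [[H _]] _ _ _ _. Qed.

Lemma nodeS d : node (sigma d) = node d.
Proof.
case: HP => _ H _ _ _; apply/eqP; rewrite eq_sym H; exact: fconnect1.
Qed.

Lemma sigma4 d c : node d = inr c ->
  sigma (sigma (sigma (sigma d))) = d /\
  uniq [:: d; sigma d; sigma (sigma d); sigma (sigma (sigma d))].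
Proof.
move=> Hd.
have Hord : fingraph.order sigma d = 4.
  case: HP => _ H _ _ [Hc _ _ _ _].
  rewrite /fingraph.order -(Hc c); apply: eq_card => d'.
  by rewrite inE -Hd eq_sym H.
have := iter_order (@perm_inj _ sigma) d.
have := orbit_uniq sigma d.
by rewrite /fingraph.orbit Hord /= => ->.
Qed.

Lemma cross_real d c : node d = inr c -> exists v, node (alpha d) = inl v.
Proof. by case: HP => _ _ _ _ [_ H _ _ _]; apply: H. Qed.

Lemma cross_inj d d' c : node d = inr c -> node d' = inr c ->
  node (alpha d) = node (alpha d') -> d = d'.
Proof. by case: HP => _ _ _ _ [_ _ H _ _]; apply: H. Qed.

Lemma ph_step x y : ph x = y -> fconnect ph x y.
Proof. by move=> <-; apply: fconnect1. Qed.

Hypothesis Hmax : maximal_1p node alpha sigma.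

Lemma max_adj u v du dv d : u != v -> node du = inl u -> node dv = inl v ->
  fconnect ph du d -> fconnect ph dv d -> adj u v.
Proof.
move=> uv Hu Hv Hdu Hdv; case: (boolP (adj u v)) => // nadj; exfalso.
apply: (Hmax uv nadj); left; exists d; split; [exists du | exists dv]; by split.
Qed.

Lemma adj_cons e c u v : node e = inr c -> node (alpha e) = inl u ->
  node (alpha (sigma e)) = inl v -> u != v -> adj u v && adj v u.
Proof.
move=> He Hu Hv uv.
have H1 : fconnect ph (alpha e) (sigma (alpha (sigma e))).
  apply: (connect_trans (@ph_step (alpha e) (sigma e) _) (ph_step _)); by rewrite /phi ?aK.
have H2 : node (sigma (alpha (sigma e))) = inl v by rewrite nodeS.
apply/andP; split.
  exact: (max_adj uv Hu H2 H1 (connect0 _ _)).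
by rewrite eq_sym in uv; exact: (max_adj uv H2 Hu (connect0 _ _) H1).
Qed.

Lemma adj_opp e c u v : node e = inr c -> node (alpha e) = inl u ->
  node (alpha (sigma (sigma e))) = inl v -> adj u v.
Proof.
move=> He Hu Hv; apply/existsP; exists (alpha e).
by rewrite Hu /farnode aK He Hv !eqxx.
Qed.

Lemma cross_dist e c v0 v1 v2 v3 : node e = inr c -> node (alpha e) = inl v0 ->
  node (alpha (sigma e)) = inl v1 -> node (alpha (sigma (sigma e))) = inl v2 ->
  node (alpha (sigma (sigma (sigma e)))) = inl v3 ->
  [&& v0 != v1, v0 != v2, v0 != v3, v1 != v2, v1 != v3 & v2 != v3].
Proof.
move=> He H0 H1 H2 H3.
have [_ Hu] := sigma4 He.
have N1 : node (sigma e) = inr c by rewrite nodeS.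
have N2 : node (sigma (sigma e)) = inr c by rewrite !nodeS.
have N3 : node (sigma (sigma (sigma e))) = inr c by rewrite !nodeS.
move: Hu; rewrite /= !inE !negb_or -!andbA andbT.
move=> /and5P[a1 a2 a3 a4 /andP[a5 a6]].
repeat (apply/andP; split); apply/eqP => E.
- by move/eqP: a1; apply; apply: (cross_inj He N1); rewrite H0 H1 E.
- by move/eqP: a2; apply; apply: (cross_inj He N2); rewrite H0 H2 E.
- by move/eqP: a3; apply; apply: (cross_inj He N3); rewrite H0 H3 E.
- by move/eqP: a4; apply; apply: (cross_inj N1 N2); rewrite H1 H2 E.
- by move/eqP: a5; apply; apply: (cross_inj N1 N3); rewrite H1 H3 E.
- by move/eqP: a6; apply; apply: (cross_inj N2 N3); rewrite H2 H3 E.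
Qed.

Lemma crossK4 e c v0 v1 v2 v3 : node e = inr c -> node (alpha e) = inl v0 ->
  node (alpha (sigma e)) = inl v1 -> node (alpha (sigma (sigma e))) = inl v2 ->
  node (alpha (sigma (sigma (sigma e)))) = inl v3 ->
  isK4 node alpha sigma [set v0; v1; v2; v3].
Proof.
move=> He H0 H1 H2 H3.
have /and5P[d01 d02 d03 d12 /andP[d13 d23]] := cross_dist He H0 H1 H2 H3.
have [H4 _] := sigma4 He.
have N1 : node (sigma e) = inr c by rewrite nodeS.
have N2 : node (sigma (sigma e)) = inr c by rewrite !nodeS.
have N3 : node (sigma (sigma (sigma e))) = inr c by rewrite !nodeS.
have /andP[a01 a10] := adj_cons He H0 H1 d01.
have /andP[a12 a21] := adj_cons N1 H1 H2 d12.
have /andP[a23 a32] := adj_cons N2 H2 H3 d23.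
have /andP[a30 a03] : adj v3 v0 && adj v0 v3.
  by apply: (adj_cons N3 H3); rewrite ?H4 // eq_sym.
have a02 := adj_opp He H0 H2.
have a20 : adj v2 v0 by apply: (adj_opp N2 H2); rewrite H4.
have a13 := adj_opp N1 H1 H3.
have a31 : adj v3 v1 by apply: (adj_opp N3 H3); rewrite H4.
apply/andP; split.
  have -> : #|[set v0; v1; v2; v3]| = #|[:: v0; v1; v2; v3]|.
    by apply: eq_card => x; rewrite !inE -!orbA.
  apply/eqP/card_uniqP; rewrite /= !inE !negb_or d01 d02 d03 d12 d13 d23.
  done.
apply/forallP => a; apply/implyP => Ha; apply/forallP => b; apply/implyP => Hb.
apply/implyP => ab.
move: Ha Hb ab; rewrite !inE -!orbA => /or4P[] /eqP -> /or4P[] /eqP -> //; rewrite ?eqxx //.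
Qed.

Lemma cross_vs e c : node e = inr c -> exists v0 v1 v2 v3,
  [/\ node (alpha e) = inl v0, node (alpha (sigma e)) = inl v1,
      node (alpha (sigma (sigma e))) = inl v2 &
      node (alpha (sigma (sigma (sigma e)))) = inl v3].
Proof.
move=> He.
have [v0 H0] := cross_real He.
have [v1 H1] : exists v, node (alpha (sigma e)) = inl v.
  by apply: (cross_real (c:=c)); rewrite nodeS.
have [v2 H2] : exists v, node (alpha (sigma (sigma e))) = inl v.
  by apply: (cross_real (c:=c)); rewrite !nodeS.
have [v3 H3] : exists v, node (alpha (sigma (sigma (sigma e)))) = inl v.
  by apply: (cross_real (c:=c)); rewrite !nodeS.
by exists v0, v1, v2, v3.
Qed.

Lemma uniq_dart d d' u : node d = inl u -> node d' = inl u ->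
  farnode node alpha sigma d = farnode node alpha sigma d' -> d = d'.
Proof. by case: HP => _ _ _ _ [_ _ _ _ H]; apply: H. Qed.

Lemma no_loop d u : node d = inl u -> farnode node alpha sigma d != inl u.
Proof. by case: HP => _ _ _ _ [_ _ _ H _]; apply: H. Qed.

Lemma face_pair y z dy dz : y != z -> node dy = inl y -> node dz = inl z ->
  fconnect ph dy dz -> adj y z && adj z y.
Proof.
move=> yz Hy Hz H; apply/andP; split.
  exact: (max_adj yz Hy Hz H (connect0 _ _)).
by rewrite eq_sym in yz; exact: (max_adj yz Hz Hy (connect0 _ _) H).
Qed.

Section Micro.
Variables (A F : {set V}) (u x w : V).
Hypothesis Hns : ~ (exists F', strong_link node alpha sigma A F').
Hypothesis Hnw : ~ (exists F', weak_link node alpha sigma A F').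
Hypothesis HFA : forall y, y \in F -> y \in A -> y = u.
Hypothesis uA : u \in A.
Hypothesis xA : x \notin A.
Hypothesis wA : w \in A.
Hypothesis Hrule : (clean node alpha sigma u x /\ u \in F /\ x \in F) \/
  (exists s t, crosses node alpha sigma u x s t /\ F = [set u; x; s; t]).

Lemma K4A e c v0 v1 v2 v3 : node e = inr c -> node (alpha e) = inl v0 ->
  node (alpha (sigma e)) = inl v1 -> node (alpha (sigma (sigma e))) = inl v2 ->
  node (alpha (sigma (sigma (sigma e)))) = inl v3 ->
  v0 \in A -> v2 \in A -> (v1 \in A) && (v3 \in A).
Proof.
move=> He H0 H1 H2 H3 A0 A2.
have /and5P[d01 d02 d03 d12 /andP[d13 d23]] := cross_dist He H0 H1 H2 H3.
have K := crossK4 He H0 H1 H2 H3.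
case: (boolP ((v1 \in A) && (v3 \in A))) => // Hn; exfalso.
set KK := [set v0; v1; v2; v3] in K.
have lo : 2 <= #|KK :&: A|.
  have <- : #|[set v0; v2]| = 2 by rewrite cards2 d02.
  apply: subset_leq_card; apply/subsetP => z; rewrite !inE.
  by case/orP => /eqP ->; rewrite ?A0 ?A2 eqxx ?orbT.
have hi : #|KK :&: A| < 4.
  move/andP: K => [/eqP <- _]; apply: proper_card; apply/properP; split.
    exact: subsetIl.
  move: Hn; rewrite negb_and => /orP[] Hn.
    by exists v1; rewrite !inE ?eqxx ?orbT // (negbTE Hn) andbF.
  by exists v3; rewrite !inE ?eqxx ?orbT // (negbTE Hn) andbF.
move: lo hi; case E: #|KK :&: A| => [|[|[|[|n]]]] //= _ _.
  by apply: Hnw; exists KK; rewrite /weak_link K E.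
by apply: Hns; exists KK; rewrite /strong_link K E.
Qed.


Lemma xF : x \in F.
Proof. by case: Hrule => [[_ [_ ->]]|[s [t [_ ->]]]] //; rewrite !inE eqxx ?orbT. Qed.

Lemma cross_case d c : node d = inl u -> farnode node alpha sigma d = inl x ->
  node (alpha d) = inr c ->
  forall y, (node (alpha (sigma (alpha d))) = inl y \/
             node (alpha (sigma (sigma (sigma (alpha d))))) = inl y) -> y \in F.
Proof.
move=> Hd Hf Hc y Hy.
case: Hrule => [[[d' [Hd' Hfd' [v Hv]]] _]|[s [t [[d'' [c' [Hd'' Hfd'' Hc'' Hst]]] ->]]]].
  have E : d' = d by apply: (uniq_dart Hd' Hd); rewrite Hf Hfd'.
  by rewrite E Hc in Hv.
have E : d'' = d by apply: (uniq_dart Hd'' Hd); rewrite Hf Hfd''.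
subst d''.
case: Hst => [[Hs Ht]|[Ht Hs]]; case: Hy => Hy.
- by move: Hs; rewrite Hy => [[<-]]; rewrite !inE eqxx ?orbT.
- by move: Ht; rewrite Hy => [[<-]]; rewrite !inE eqxx ?orbT.
- by move: Ht; rewrite Hy => [[<-]]; rewrite !inE eqxx ?orbT.
- by move: Hs; rewrite Hy => [[<-]]; rewrite !inE eqxx ?orbT.
Qed.

Lemma BackF a : node a = inl u -> farnode node alpha sigma a = inl x ->
  exists y dy, [/\ node dy = inl y, fconnect ph dy (alpha a), y \in F & y \notin A].
Proof.
move=> Ha Hf; case Ea: (node (alpha a)) => [v|c].
  have : farnode node alpha sigma a = inl v by rewrite /farnode Ea.
  rewrite Hf => [[Ev]]; subst v; exists x, (alpha a); split; [by [] | exact: connect0 | exact: xF | by []].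
have [v0 [v1 [v2 [v3 [H0 H1 H2 H3]]]]] := cross_vs Ea.
exists v3, (alpha (sigma (sigma (sigma (alpha a))))).
have yF : v3 \in F by apply: (cross_case Ha Hf Ea); right.
split => //.
  by apply: ph_step; rewrite /phi aK; case: (sigma4 Ea).
apply/negP => yA; have E := HFA yF yA.
have /and5P[_ _ d03 _ _] := cross_dist Ea H0 H1 H2 H3.
by move: H0 d03; rewrite aK Ha E => [[->]]; rewrite eqxx.
Qed.

Lemma FwdF b : node b = inl u -> farnode node alpha sigma b = inl x ->
  exists y dy, [/\ node dy = inl y, fconnect ph b dy, y \in F & y \notin A].
Proof.
move=> Hb Hf; case Eb: (node (alpha b)) => [v|c].
  have : farnode node alpha sigma b = inl v by rewrite /farnode Eb.
  rewrite Hf => [[Ev]]; subst v; exists x, (sigma (alpha b)); split; [by rewrite nodeS | exact: ph_step | exact: xF | by []].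
have [v0 [v1 [v2 [v3 [H0 H1 H2 H3]]]]] := cross_vs Eb.
exists v1, (sigma (alpha (sigma (alpha b)))).
have yF : v1 \in F by apply: (cross_case Hb Hf Eb); left.
split => //.
  by rewrite nodeS.
  exact: (connect_trans (@ph_step b (sigma (alpha b)) erefl) (ph_step _)).
apply/negP => yA; have E := HFA yF yA.
have /and5P[d01 _ _ _ _] := cross_dist Eb H0 H1 H2 H3.
by move: H0 d01; rewrite aK Hb E => [[->]]; rewrite eqxx.
Qed.

Lemma BackA a : node a = inl u -> farnode node alpha sigma a = inl w ->
  exists z dz, [/\ node dz = inl z, fconnect ph dz (alpha a), z \in A & z != u].
Proof.
move=> Ha Hf; case Ea: (node (alpha a)) => [v|c].
  have : farnode node alpha sigma a = inl v by rewrite /farnode Ea.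
  rewrite Hf => [[Ev]]; subst v; exists w, (alpha a); split; [by [] | exact: connect0 | by [] | ].
  by apply/eqP => E; have := no_loop Ha; rewrite Hf E eqxx.
have [v0 [v1 [v2 [v3 [H0 H1 H2 H3]]]]] := cross_vs Ea.
have E0 : v0 = u by move: H0; rewrite aK Ha => [[]].
have E2 : v2 = w by move: Hf; rewrite /farnode Ea H2 => [[]].
have /and5P[_ _ d03 _ _] := cross_dist Ea H0 H1 H2 H3.
have /andP[_ A3] := K4A Ea H0 H1 H2 H3 (etrans (f_equal _ E0) uA) (etrans (f_equal _ E2) wA).
exists v3, (alpha (sigma (sigma (sigma (alpha a))))); split => //.
  by apply: ph_step; rewrite /phi aK; case: (sigma4 Ea).
by rewrite eq_sym -E0.
Qed.

Lemma FwdA b : node b = inl u -> farnode node alpha sigma b = inl w ->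
  exists z dz, [/\ node dz = inl z, fconnect ph b dz, z \in A & z != u].
Proof.
move=> Hb Hf; case Eb: (node (alpha b)) => [v|c].
  have : farnode node alpha sigma b = inl v by rewrite /farnode Eb.
  rewrite Hf => [[Ev]]; subst v; exists w, (sigma (alpha b)); split; [by rewrite nodeS | exact: ph_step | by [] | ].
  by apply/eqP => E; have := no_loop Hb; rewrite Hf E eqxx.
have [v0 [v1 [v2 [v3 [H0 H1 H2 H3]]]]] := cross_vs Eb.
have E0 : v0 = u by move: H0; rewrite aK Hb => [[]].
have E2 : v2 = w by move: Hf; rewrite /farnode Eb H2 => [[]].
have /and5P[d01 _ _ _ _] := cross_dist Eb H0 H1 H2 H3.
have /andP[A1 _] := K4A Eb H0 H1 H2 H3 (etrans (f_equal _ E0) uA) (etrans (f_equal _ E2) wA).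
exists v1, (sigma (alpha (sigma (alpha b)))); split => //.
  by rewrite nodeS.
  exact: (connect_trans (@ph_step b (sigma (alpha b)) erefl) (ph_step _)).
by rewrite eq_sym -E0.
Qed.

Lemma micro_edge : consecutive node alpha sigma u x w ->
  exists y z, [/\ y \in F, y \notin A, z \in A, z != u & adj y z /\ adj z y].
Proof.
move=> [d [Hd Hc]].
have Hsd : node (sigma d) = inl u by rewrite nodeS.
have step : fconnect ph (alpha d) (sigma d) by apply: ph_step; rewrite /phi aK.
case: Hc => [[Hx Hw]|[Hw Hx]].
  have [y [dy [Hy Cy yF yA]]] := BackF Hd Hx.
  have [z [dz [Hz Cz zA zu]]] := FwdA Hsd Hw.
  have yz : y != z by apply/eqP => E; rewrite E zA in yA.
  have /andP[a1 a2] := face_pair yz Hy Hz (connect_trans Cy (connect_trans step Cz)).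
  by exists y, z; repeat split.
have [z [dz [Hz Cz zA zu]]] := BackA Hd Hw.
have [y [dy [Hy Cy yF yA]]] := FwdF Hsd Hx.
have zy : z != y by apply/eqP => E; rewrite -E zA in yA.
have /andP[a1 a2] := face_pair zy Hz Hy (connect_trans Cz (connect_trans step Cy)).
by exists y, z; repeat split.
Qed.

End Micro.
End Geo.

Definition conn_on (V : finType) (adj : rel V) (B : {set V}) :=
  forall u v, u \in B -> v \in B -> induced_connect adj B u v.

Lemma ic_mono (V : finType) (adj : rel V) (X W : {set V}) u v :
  X \subset W -> induced_connect adj X u v -> induced_connect adj W u v.
Proof.
move=> sXW; apply: connect_sub => x y /and3P[xX yX e]; apply: connect1.
by rewrite /= (subsetP sXW _ xX) (subsetP sXW _ yX) e.
Qed.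

Lemma ic_edge (V : finType) (adj : rel V) (W : {set V}) x y :
  x \in W -> y \in W -> adj x y -> induced_connect adj W x y.
Proof. by move=> xW yW e; apply: connect1; rewrite /= xW yW e. Qed.

Lemma join (V : finType) (adj : rel V) (W X Y : {set V}) z y :
  X \subset W -> Y \subset W -> W \subset X :|: Y -> conn_on adj X -> conn_on adj Y ->
  z \in X -> y \in Y -> induced_connect adj W z y -> induced_connect adj W y z ->
  conn_on adj W.
Proof.
move=> sX sY sW cX cY zX yY zy yz p q pW qW.
move: (subsetP sW _ pW) (subsetP sW _ qW); rewrite !inE => /orP[] pP /orP[] qP.
- exact: ic_mono sX (cX _ _ pP qP).
- apply: connect_trans (ic_mono sX (cX _ _ pP zX)) _.
  exact: connect_trans zy (ic_mono sY (cY _ _ yY qP)).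
- apply: connect_trans (ic_mono sY (cY _ _ pP yY)) _.
  exact: connect_trans yz (ic_mono sX (cX _ _ zX qP)).
- exact: ic_mono sY (cY _ _ pP qP).
Qed.

Lemma clique_conn (V : finType) (adj : rel V) (Y : {set V}) :
  (forall a b, a \in Y -> b \in Y -> a != b -> adj a b) -> conn_on adj Y.
Proof.
move=> H p q pY qY; case: (eqVneq p q) => [->|pq]; first exact: connect0.
by apply: ic_edge => //; apply: H.
Qed.

Lemma K4adj (V C D : finType) (node : D -> (V + C)%type) (alpha sigma : {perm D})
  (F : {set V}) a b :
  isK4 node alpha sigma F -> a \in F -> b \in F -> a != b -> gadj node alpha sigma a b.
Proof.
move=> /andP[_ /forallP H] aF bF ab.
by move: (H a); rewrite aF /= => /forallP /(_ b); rewrite bF ab.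
Qed.

Lemma seq_2conn (V C D : finType) (node : D -> (V + C)%type) (alpha sigma : {perm D})
  (N : nat) (Vs Fs : nat -> {set V}) :
  one_plane node alpha sigma -> maximal_1p node alpha sigma ->
  swm_sequence node alpha sigma N Vs Fs ->
  forall j, j <= N -> forall t, conn_on (gadj node alpha sigma) (Vs j :\ t).
Proof.
move=> HP Hmax [H0 _ Hst]; elim=> [|j IH] jN t.
  apply: clique_conn => a b; rewrite !inE => /andP[_ aA] /andP[_ bA] ab.
  exact: (K4adj H0).
have [Hlink Hchoice HV] := Hst j.+1 jN.
rewrite /= in Hlink Hchoice HV.
set A := Vs j in Hlink Hchoice HV IH *; set F := Fs j.+1 in Hlink Hchoice HV *.
have IHA := IH (ltnW jN) t.
have /andP[K4F /andP[c1 c3]] := Hlink.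
have sX : A :\ t \subset Vs j.+1 :\ t by rewrite HV; apply: setSD; apply: subsetUl.
have sY : F :\ t \subset Vs j.+1 :\ t by rewrite HV; apply: setSD; apply: subsetUr.
have sW : Vs j.+1 :\ t \subset (A :\ t) :|: (F :\ t) by rewrite HV setDUl.
have cY : conn_on (gadj node alpha sigma) (F :\ t).
  apply: clique_conn => a b; rewrite !inE => /andP[_ aA] /andP[_ bA] ab.
  exact: (K4adj K4F).
case: (boolP [exists a, a \in (F :&: A) :\ t]) => [/existsP[a]|].
  rewrite !inE => /and3P[aT aF aA].
  apply: (join sX sY sW IHA cY (z:=a) (y:=a)); rewrite ?inE ?aT ?aF ?aA //;
    exact: connect0.
rewrite negb_exists => /forallP Hno.
have Hno' : forall a, a \in F -> a \in A -> a = t.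
  move=> a aF aA; move: (Hno a); rewrite !inE aF aA andbT andbT.
  by move/negbNE/eqP.
have [a aFA] : exists a, a \in F :&: A by apply/set0Pn; rewrite -card_gt0.
have aFA' := aFA; rewrite inE in aFA'; case/andP: aFA' => aF aA.
have Eat := Hno' a aF aA; subst a.
have c1' : #|F :&: A| = 1.
  apply/eqP; rewrite eqn_leq c1 andbT.
  rewrite -(cards1 t); apply: subset_leq_card; apply/subsetP => b; rewrite !inE.
  by case/andP => bF bA; rewrite (Hno' b bF bA).
case: Hchoice => [[_ /andP[_ /eqP E]]|[[_ [_ /andP[_ /eqP E]]]|]]; first by rewrite E in c1'.
  by rewrite E in c1'.
move=> [Hns Hnw _ [u [x [w [/and3P[uA xA wA] _ _ [Hcons Hrule]]]]]].
have uF : u \in F.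
  by case: Hrule => [[_ [-> _]]|[s [s' [_ ->]]]] //; rewrite !inE eqxx.
have Eut := Hno' u uF uA; subst u.
have HFA : forall y, y \in F -> y \in A -> y = t by [].
have [y [z [yF yA zA zt [ayz azy]]]] :=
  micro_edge HP Hmax Hns Hnw HFA uA xA wA Hrule Hcons.
have yt : y != t by apply/eqP => E; rewrite E aA in yA.
have zX : z \in A :\ t by rewrite !inE zt zA.
have yY : y \in F :\ t by rewrite !inE yt yF.
apply: (join sX sY sW IHA cY zX yY).
  by apply: ic_edge => //; [exact: (subsetP sX) | exact: (subsetP sY)].
by apply: ic_edge => //; [exact: (subsetP sY) | exact: (subsetP sX)].
Qed.

Theorem lemma4p7 (V C D : finType) (node : D -> (V + C)%type)
  (alpha sigma : {perm D}) (N : nat) (Vs Fs : nat -> {set V}) :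
  one_plane node alpha sigma ->
  maximal_1p node alpha sigma ->
  4 <= #|V| ->
  (forall u v, gadj node alpha sigma u v ->
     exists F, [/\ isK4 node alpha sigma F, u \in F & v \in F]) ->
  swm_sequence node alpha sigma N Vs Fs ->
  forall (i : nat) (s t : V), 1 <= i <= N -> s != t ->
  cutset (gadj node alpha sigma) (Vs i) [set s; t] ->
  ~ cutset (gadj node alpha sigma) (Vs i.-1) [set s; t] ->
  (weak_link node alpha sigma (Vs i.-1) (Fs i) \/
   micro_link node alpha sigma (Vs i.-1) (Fs i)) /\
  ([set s; t] \subset Vs i.-1 \/
   (micro_link node alpha sigma (Vs i.-1) (Fs i) /\
    #|[set s; t] :&: Vs i.-1| = 1)).
Proof.
move=> HP Hmax _ _ Hseq i s t iN st Hcut Hncut.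
have Hseq' := Hseq; case: Hseq' => _ _ Hst.
have [Hlink _ HV] := Hst i iN.
case/andP: iN => i1 iN.
have P2A := seq_2conn HP Hmax Hseq (leq_trans (leq_pred i) iN).
set A := Vs i.-1 in Hlink HV Hncut P2A *; set F := Fs i in Hlink HV *.
set S := [set s; t] in Hcut Hncut *.
set adj := gadj node alpha sigma in Hcut Hncut P2A *.
have /andP[K4F /andP[c1 c3]] := Hlink.
have cS : #|S| = 2 by rewrite cards2 st.
have HFAS : forall a, a \in F -> a \in A -> a \in S.
  move=> a aF aA; apply/negPn/negP => aS.
  have connAS : conn_on adj (A :\: S).
    case: (boolP (S \subset A)) => SA.
      move=> p q pX qX; apply/negPn/negP => nc; apply: Hncut; split => //.
      by exists p, q; split.
    case/subsetPn: SA => r rS rA.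
    have [q Eq] : exists q, A :\: S = A :\ q.
      move: rS; rewrite /S !inE => /orP[] /eqP Er; subst r.
        exists t; apply/setP => z; rewrite /S !inE.
        by case: (eqVneq z s) => [->|]; rewrite ?(negbTE rA) ?andbF.
      exists s; apply/setP => z; rewrite /S !inE.
      by case: (eqVneq z t) => [->|]; rewrite ?(negbTE rA) ?andbF ?orbF.
    by rewrite Eq; apply: P2A.
  have cY : conn_on adj (F :\: S).
    apply: clique_conn => p q; rewrite !inE => /andP[_ pA] /andP[_ qA] pq.
    exact: (K4adj K4F).
  have sX : A :\: S \subset Vs i :\: S by rewrite HV; apply: setSD; apply: subsetUl.
  have sY : F :\: S \subset Vs i :\: S by rewrite HV; apply: setSD; apply: subsetUr.
  have sW : Vs i :\: S \subset (A :\: S) :|: (F :\: S) by rewrite HV setDUl.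
  have aX : a \in A :\: S by rewrite inE aS aA.
  have aY : a \in F :\: S by rewrite inE aS aF.
  have cW := join sX sY sW connAS cY aX aY (connect0 _ _) (connect0 _ _).
  case: Hcut => _ [p [q [pW qW]]]; apply/negP/negPn.
  exact: cW.
have sFA : F :&: A \subset S.
  by apply/subsetP => a; rewrite inE => /andP[aF aA]; apply: HFAS.
case: (boolP (S \subset A)) => SA.
  split; last by left.
  have : #|F :&: A| <= 2 by rewrite -cS; apply: subset_leq_card.
  move: c1; case E: #|F :&: A| => [|[|[|n]]] // _ _.
    by right; rewrite /micro_link K4F E.
  by left; rewrite /weak_link K4F E.
have sSA : #|S :&: A| <= 1.
  rewrite -ltnS -cS; apply: proper_card; apply/properP; split.
    exact: subsetIl.
  case/subsetPn: SA => r rS rA; exists r => //.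
  by rewrite inE (negbTE rA) andbF.
have sFSA : F :&: A \subset S :&: A.
  by apply/subsetP => a aFA; rewrite inE (subsetP sFA _ aFA); case/setIP: aFA.
have le := subset_leq_card sFSA.
have E1 : #|F :&: A| = 1.
  by apply/eqP; rewrite eqn_leq c1 andbT (leq_trans le sSA).
have E2 : #|S :&: A| = 1.
  by apply/eqP; rewrite eqn_leq sSA -E1 le.
have Hm : micro_link node alpha sigma A F by rewrite /micro_link K4F E1.
by split; right.
Qed.
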